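(* There is a formula $\phi_{\in}(X_l,X_r,Z)$ in the signature of $\mathcal{W}(I)$ such that for every $i\in I$ and every $A\in\mathcal{P}_{\mathrm{fci}}(I)$, $$i\in A \iff \mathcal{W}(I)\models\phi_{\in}(l(A),r(A),\{i\}).$$
   Context: Let $I$ be a dense linear order with left endpoint $0$ and no right endpoint. Let $\mathcal{P}_{\mathrm{fci}}(I)$ be the set of finite unions of closed intervals $[i,j]$, $[i,+\infty)$, $(-\infty,j]$ of $I$. For $A\in\mathcal{P}_{\mathrm{fci}}(I)$, $l(A)$ and $r(A)$ are the finite sets of left and right endpoints of $A$. Left endpoints are the minima of the maximal closed intervals composing $A$, and right endpoints are the maxima of the bounded ones. $\mathcal{W}(I)$ has universe the finite subsets of $I$ and signature $\{\cup,\cap,\bot,c_0,\min,\max,\mathrm{ips}\}$, interpreted as follows. - $\cup$ and $\cap$ are union and intersection. - $\bot$ is $\emptyset$, and $c_0$ is $\{0\}$. - $\min$ and $\max$ send a nonempty set to the singleton of its minimum, respectively maximum, and fix $\emptyset$. - $\mathrm{ips}(A,B)=\{i\in A: s_A(i)\in B\}$, where $s_A$ is the successor function of $A$. *)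

(* Defs.v *)
From HB Require Import structures.
From mathcomp Require Import all_boot all_order.
From mathcomp Require Import finmap.
Set Implicit Arguments. Unset Strict Implicit. Unset Printing Implicit Defensive.
Import Order.TTheory.
Local Open Scope order_scope.
Local Open Scope fset_scope.

Section W.
Context {d : Order.disp_t} {T : orderType d}.

Inductive cinterval :=
  | CBnd of T & T
  | CRayR of T
  | CRayL of T.

Definition cinterval_mem (J : cinterval) (x : T) : Prop :=
  match J with
  | CBnd i j => i <= x /\ x <= j
  | CRayR i => i <= x
  | CRayL j => x <= j
  end.

Fixpoint in_list (J : cinterval) (s : seq cinterval) : Prop :=
  match s with [::] => False | K :: s' => J = K \/ in_list J s' end.

Definition is_fci (A : T -> Prop) : Prop :=
  exists s : seq cinterval, forall x, A x <-> exists2 J, in_list J s & cinterval_mem J x.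

Definition convex_set (C : T -> Prop) : Prop :=
  forall a b c, C a -> C b -> a <= c -> c <= b -> C c.

(* C is a maximal (nonempty) convex subset of A, i.e. one of the maximal
   closed intervals composing A *)
Definition max_component (A C : T -> Prop) : Prop :=
  [/\ exists x, C x,
      (forall x, C x -> A x),
      convex_set C &
      forall C' : T -> Prop, (forall x, C x -> C' x) -> (forall x, C' x -> A x) ->
        convex_set C' -> forall x, C' x -> C x].

Definition left_endpoint (A : T -> Prop) (x : T) : Prop :=
  exists C, [/\ max_component A C, C x & forall y, C y -> x <= y].

Definition right_endpoint (A : T -> Prop) (x : T) : Prop :=
  exists C, [/\ max_component A C, C x & forall y, C y -> y <= x].

Definition wmin (A : {fset T}) : {fset T} := [fset x in A | all (fun y => x <= y) A].
Definition wmax (A : {fset T}) : {fset T} := [fset x in A | all (fun y => y <= x) A].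

Definition succ_in (A : {fset T}) (x y : T) : bool :=
  [&& y \in A, x < y & all (fun z => ~~ ((x < z) && (z < y))) A].

Definition wips (A B : {fset T}) : {fset T} :=
  [fset x in A | has (fun y => succ_in A x y) B].

End W.

Inductive wterm :=
  | TVar of nat
  | TCup of wterm & wterm
  | TCap of wterm & wterm
  | TBot
  | TC0
  | TMin of wterm
  | TMax of wterm
  | TIps of wterm & wterm.

Inductive wform :=
  | FEq of wterm & wterm
  | FFalse
  | FNot of wform
  | FAnd of wform & wform
  | FOr of wform & wform
  | FImp of wform & wform
  | FEx of nat & wform
  | FAll of nat & wform.

Fixpoint term_vars_in (P : nat -> bool) (t : wterm) : bool :=
  match t with
  | TVar n => P n
  | TCup a b | TCap a b | TIps a b => term_vars_in P a && term_vars_in P b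
  | TBot | TC0 => true
  | TMin a | TMax a => term_vars_in P a
  end.

Fixpoint form_fv_in (P : nat -> bool) (f : wform) : bool :=
  match f with
  | FEq a b => term_vars_in P a && term_vars_in P b
  | FFalse => true
  | FNot g => form_fv_in P g
  | FAnd g h | FOr g h | FImp g h => form_fv_in P g && form_fv_in P h
  | FEx n g | FAll n g => form_fv_in (fun m => (m == n) || P m) g
  end.

Section Sem.
Context {d : Order.disp_t} {T : orderType d} (zero : T).

Fixpoint weval (e : nat -> {fset T}) (t : wterm) : {fset T} :=
  match t with
  | TVar n => e n
  | TCup a b => weval e a `|` weval e b
  | TCap a b => weval e a `&` weval e b
  | TBot => fset0
  | TC0 => [fset zero]
  | TMin a => wmin (weval e a)
  | TMax a => wmax (weval e a)
  | TIps a b => wips (weval e a) (weval e b)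
  end.

Definition upd (e : nat -> {fset T}) (n : nat) (X : {fset T}) : nat -> {fset T} :=
  fun m => if m == n then X else e m.

Fixpoint wsat (e : nat -> {fset T}) (f : wform) : Prop :=
  match f with
  | FEq a b => weval e a = weval e b
  | FFalse => False
  | FNot g => ~ wsat e g
  | FAnd g h => wsat e g /\ wsat e h
  | FOr g h => wsat e g \/ wsat e h
  | FImp g h => wsat e g -> wsat e h
  | FEx n g => exists X : {fset T}, wsat (upd e n X) g
  | FAll n g => forall X : {fset T}, wsat (upd e n X) g
  end.

End Sem.

(* valuation X_l := 0, X_r := 1, Z := 2 *)
Definition env3 {d : Order.disp_t} {T : orderType d} (L R Z : {fset T}) : nat -> {fset T} :=
  fun n => match n with 0 => L | 1 => R | _ => Z end.

(* Main.v *)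
Require Import Defs.
From HB Require Import structures.
From mathcomp Require Import all_boot all_order.
From mathcomp Require Import finmap.
From Stdlib Require Import Classical.
Import Order.TTheory.
Local Open Scope order_scope.
Local Open Scope fset_scope.
Section S.
Context {d : Order.disp_t} {T : orderType d}.
Lemma wmin1U (a : T) (Y : {fset T}) : wmin ([fset a] `|` Y) = [fset a] <-> forall y, y \in Y -> a <= y.
Proof.
split.
- move=> H y yY. have : a \in wmin ([fset a] `|` Y) by rewrite H inE.
  rewrite inE => /andP[_ /allP]; apply. by rewrite inE yY orbT.
- move=> H; apply/fsetP => x; rewrite !inE.
  case: (eqVneq x a) => [->|xa] /=.
  + apply/allP => y; rewrite !inE => /orP[/eqP->|/H] //.
  + apply/negbTE/negP => /andP[xY /allP Ha].
    have h1 := H _ xY. have h2 : x <= a by apply: Ha; rewrite !inE eqxx.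
    by move: xa; rewrite (@le_anti _ _ x a) ?h1 ?h2 ?eqxx.
Qed.

Lemma wminX (X : {fset T}) (i : T) : X != fset0 -> wmin (X `|` [fset i]) = X ->
  exists l, X = [fset l] /\ l <= i.
Proof.
move=> /fset0Pn[x xX] H.
have key : forall y, y \in X -> forall z, z \in X `|` [fset i] -> y <= z.
  move=> y yX z zX. move: yX; rewrite -H inE => /andP[_ /allP]; apply; done.
exists x; split.
- apply/fsetP => y; rewrite inE; apply/idP/eqP => [yX|->//].
  by apply: le_anti; rewrite !key // inE ?xX ?yX.
- by apply: key => //; rewrite !inE eqxx orbT.
Qed.

Lemma capE (X L : {fset T}) : X `&` L = X <-> forall x, x \in X -> x \in L.
Proof.
split.
- by move=> H x; rewrite -H inE => /andP[].
- move=> H; apply/fsetP => x; rewrite inE; case xX: (x \in X); rewrite ?andbF //.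
  by rewrite H.
Qed.

Lemma convex_cint (J : @cinterval d T) : convex_set (cinterval_mem J).
Proof.
case: J => [a b|a|b] x y z /=.
- move=> [h1 h2] [h3 h4] h5 h6; split; [exact: le_trans h1 h5|exact: le_trans h6 h4].
- move=> h1 _ h5 _; exact: le_trans h1 h5.
- move=> _ h4 _ h6; exact: le_trans h6 h4.
Qed.

Lemma union_conv (A C K : T -> Prop) x : max_component A C -> C x -> K x ->
  convex_set K -> (forall y, K y -> A y) -> forall y, K y -> C y.
Proof.
case=> _ CA cC cmax HCx HKx cK KA y Ky.
apply: (cmax (fun z => C z \/ K z)) => //; [by move=> z; left | by move=> z [/CA|/KA] | | by right].
move=> a b c [Ca|Ka] [Cb|Kb] ac cb.
- left; exact: cC Ca Cb ac cb.
- case: (leP c x) => cx; first by left; exact: cC Ca HCx ac cx.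
  right; exact: cK HKx Kb (ltW cx) cb.
- case: (leP c x) => cx; first by right; exact: cK Ka HKx ac cx.
  left; exact: cC HCx Cb (ltW cx) cb.
- right; exact: cK Ka Kb ac cb.
Qed.

Lemma ext_list (R : rel T) (s : seq (@cinterval d T)) (f : cinterval -> T) (Q : cinterval -> Prop) :
 (forall a b, R a b || R b a) -> transitive R ->
 (exists2 J, in_list J s & Q J) ->
 exists J, [/\ in_list J s, Q J & forall J', in_list J' s -> Q J' -> R (f J) (f J')].
Proof.
move=> tot tr; elim: s => [[J []]|K s IH] //= HE.
have refl a : R a a by case/orP: (tot a a).
case: (classic (exists2 J, in_list J s & Q J)) => [/IH [J0 [J0s QJ0 mJ0]]|nE].
- case: (classic (Q K)) => QK.
  + case/orP: (tot (f K) (f J0)) => h.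
    * exists K; split => //; first by left.
      move=> J' [->|J's] QJ' //; exact: tr h (mJ0 _ J's QJ').
    * exists J0; split => //; first by right.
      by move=> J' [->|J's] QJ' //; apply: mJ0.
  + exists J0; split => //; first by right.
    by move=> J' [->|J's] QJ' //; apply: mJ0.
- case: HE => J [->|Js] QJ; last by case: nE; exists J.
  exists K; split => //; first by left.
  by move=> J' [->|J's] QJ' //; case: nE; exists J'.
Qed.

Definition btw (u v y : T) := (u <= y /\ y <= v) \/ (v <= y /\ y <= u).

Lemma btw_conv a b c i y : btw c i y -> a <= c -> c <= b -> btw a i y \/ btw b i y.
Proof.
move=> [[h1 h2]|[h1 h2]] ac cb.
- left; left; split => //; exact: le_trans ac h1.
- right; right; split => //; exact: le_trans h2 cb.
Qed.

Variable zero : T.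
Hypothesis zero_min : forall x : T, zero <= x.

Definition lend (J : @cinterval d T) := match J with CBnd a _ => a | CRayR a => a | CRayL _ => zero end.
Definition rend (J : @cinterval d T) := match J with CBnd _ b => b | CRayR a => a | CRayL b => b end.

Lemma lend_le J x : cinterval_mem J x -> lend J <= x /\ forall y, lend J <= y -> y <= x -> cinterval_mem J y.
Proof.
case: J => [a b|a|b] /=.
- move=> [h1 h2]; split => // y h3 h4; split => //; exact: le_trans h4 h2.
- by move=> h1; split.
- move=> h; split => // y _ h4; exact: le_trans h4 h.
Qed.

Arguments lend_le {J x}.
Arguments btw_conv {a b c i y}.
Arguments union_conv {A C K x}.
Lemma fwd (A : T -> Prop) s (Hs : forall x, A x <-> exists2 J, in_list J s & cinterval_mem J x) i :
  A i -> exists l, [/\ left_endpoint A l, l <= i & forall r, right_endpoint A r -> l <= r -> i <= r].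
Proof.
move=> Ai.
pose P x := forall y, x <= y -> y <= i -> A y.
have HE : exists2 J, in_list J s & (fun J => lend J <= i /\ P (lend J)) J.
  case/Hs: Ai => J Js Ji; exists J => //; have [h1 h2] := lend_le Ji; split => // y h3 h4.
  by apply/Hs; exists J => //; apply: h2.
have [J0 [J0s [l_i Pl] mJ0]] := @ext_list (<=%O) s lend _
  (fun a b => le_total a b) (fun a b c h1 h2 => le_trans h1 h2) HE.
set l := lend J0 in l_i Pl mJ0.
have keyP x : x <= i -> P x -> l <= x.
  move=> xi Px; have := Px x (lexx x) xi; case/Hs => J Js Jx.
  have [h1 h2] := lend_le Jx; refine (le_trans (mJ0 J Js _) h1); split; first exact: le_trans h1 xi.
  move=> y h3 h4; case: (leP y x) => yx; first by apply/Hs; exists J => //; apply: h2.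
  exact: Px (ltW yx) h4.
pose C x := forall y, btw x i y -> A y.
have Cconv : convex_set C.
  move=> a b c Ca Cb ac cb y H; case: (btw_conv H ac cb) => [/Ca|/Cb] //.
have Ci : C i by move=> y [[h1 h2]|[h1 h2]]; rewrite (@le_anti _ _ y i) ?h1 ?h2.
have CA x : C x -> A x.
  move=> Cx; apply: Cx; case: (leP x i) => h; [left|right; move/ltW: h => h]; split => //.
have Cl : C l.
  move=> y [[h1 h2]|[h1 h2]]; first exact: Pl.
  exact: Pl (le_trans l_i h1) (le_trans h2 l_i).
have Cmin x : C x -> l <= x.
  move=> Cx; case: (leP x i) => xi; last exact: le_trans l_i (ltW xi).
  by apply: keyP => // y h1 h2; apply: Cx; left.
have Cmax : max_component A C.
  split => //; first by exists i.
  move=> C' CC' C'A cC' x C'x y Hy; apply: C'A.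
  case: Hy => [[h1 h2]|[h1 h2]]; first exact: cC' C'x (CC' _ Ci) h1 h2.
  exact: cC' (CC' _ Ci) C'x h1 h2.
exists l; split => //; first by exists C; split.
move=> r [C' [C'max C'r C'le]] lr.
case: (leP i r) => // ri.
have Cr : C r by apply: Cconv Cl Ci lr (ltW ri).
have := union_conv C'max C'r Cr Cconv CA i Ci.
by move/C'le; rewrite leNgt ri.
Qed.

Lemma bwd (A : T -> Prop) s (Hs : forall x, A x <-> exists2 J, in_list J s & cinterval_mem J x) i l :
  left_endpoint A l -> l <= i -> (forall r, right_endpoint A r -> l <= r -> i <= r) -> A i.
Proof.
move=> [C [Cmax Cl Cmin]] li Hr.
have [_ CA Cconv _] := Cmax.
suff : C i by apply: CA.
apply: NNPP => nCi.
have KC J x : in_list J s -> cinterval_mem J x -> C x -> forall y, cinterval_mem J y -> C y.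
  move=> Js Jx Cx; apply: (union_conv Cmax Cx Jx (convex_cint J)) => y Jy; apply/Hs; by exists J.
pose Q J := match J with CRayR _ => False | _ => C (rend J) end.
have ex x : C x -> exists2 J, in_list J s & Q J /\ x <= rend J.
  move=> Cx; case/Hs: (CA x Cx) => J Js Jx; exists J => //.
  have KJ := KC J x Js Jx Cx.
  move: KJ Jx; rewrite /Q; case: J {Js} => [a b|a|b] /= KJ Jx.
  - case: Jx => h1 h2; split => //; apply: KJ; split => //; exact: le_trans h1 h2.
  - exfalso; apply: nCi; case: (leP x i) => xi; first by apply: KJ; exact: le_trans Jx xi.
    exact: Cconv Cl Cx li (ltW xi).
  - by split => //; apply: KJ.
have [J1 J1s [QJ1 _]] := ex l Cl.
have [J0 [J0s QJ0 mJ0]] := @ext_list (fun a b => b <= a) s rend Q (fun a b => le_total b a)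
   (fun a b c h1 h2 => le_trans h2 h1) (ex_intro2 _ _ J1 J1s QJ1).
have Cr : C (rend J0) by move: QJ0; rewrite /Q; case: J0 {J0s mJ0}.
apply: nCi; apply: (Cconv _ _ _ Cl Cr li).
apply: Hr; last exact: Cmin.
exists C; split => // y Cy.
have [J Js [QJ yJ]] := ex y Cy; exact: le_trans yJ (mJ0 J Js QJ).
Qed.
End S.

Definition phi0 : wform :=
  FEx 3 (FAnd (FNot (FEq (TVar 3) TBot))
         (FAnd (FEq (TCap (TVar 3) (TVar 0)) (TVar 3))
         (FAnd (FEq (TMin (TCup (TVar 3) (TVar 2))) (TVar 3))
               (FAll 4 (FImp (FAnd (FEq (TCap (TVar 4) (TVar 1)) (TVar 4))
                                   (FEq (TMin (TCup (TVar 3) (TVar 4))) (TVar 3)))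
                             (FEq (TMin (TCup (TVar 2) (TVar 4))) (TVar 2))))))).

Theorem lemma6p2 (d : Order.disp_t) (T : orderType d) (zero : T)
  (zero_min : forall x : T, zero <= x)
  (dense : forall x y : T, x < y -> exists z : T, x < z /\ z < y)
  (no_right_end : forall x : T, exists y : T, x < y) :
  exists phi : wform,
    form_fv_in (fun n => n < 3)%N phi /\
    forall (i : T) (A : T -> Prop), is_fci A ->
      forall L R : {fset T},
        (forall x, x \in L <-> left_endpoint A x) ->
        (forall x, x \in R <-> right_endpoint A x) ->
        (A i <-> wsat zero (env3 L R [fset i]) phi).
Proof.
exists phi0; split; first by [].
move=> i A [s Hs] L R HL HR /=; rewrite /upd /=.
split.
- move=> Ai; have [l [lL li Hr]] := @fwd _ _ zero zero_min _ _ Hs _ Ai.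
  exists [fset l]; split; [|split; [|split]].
  + by move/fsetP/(_ l); rewrite !inE eqxx.
  + by apply/capE => x; rewrite inE => /eqP ->; apply/HL.
  + by apply/wmin1U => y; rewrite inE => /eqP ->.
  + move=> Y [/capE YR /wmin1U lY]; apply/wmin1U => y yY.
    by apply: Hr; [apply/HR; apply: YR | apply: lY].
- move=> [X [/eqP X0 [/capE XL [HX HY]]]].
  have [l [Xl li]] := @wminX _ _ X i X0 HX; subst X.
  apply: ((@bwd _ _ _ _ Hs _ l)) => //; first by apply/HL; apply: XL; rewrite inE.
  move=> r rR lr.
  have := HY [fset r]; rewrite !(wmin1U, capE); apply.
  + by split => y; rewrite inE => /eqP -> //; apply/HR.
  by rewrite inE.
Qed.
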